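(* A quiver $J$ is mono-injective in the category $\mathbf{Quiv}$ of quivers and quiver homomorphisms if and only if $J$ is loaded and has at least one vertex.
   Context: A quiver is a quadruple $(V,E,\sigma,\tau)$ with $V,E$ sets and $\sigma,\tau : E \to V$ functions (source and target maps). A quiver homomorphism $G \to H$ is a pair $(\phi_V,\phi_E)$ of functions $\phi_V : V_G \to V_H$, $\phi_E : E_G \to E_H$ with $\phi_V\circ\sigma_G = \sigma_H\circ\phi_E$ and $\phi_V\circ\tau_G=\tau_H\circ\phi_E$; composition is componentwise. A quiver homomorphism is a monomorphism in $\mathbf{Quiv}$ if and only if both its vertex map and edge map are injective. A quiver $J$ is mono-injective if for every monomorphism $\phi : A \to B$ and every homomorphism $\psi : A \to J$ there is a homomorphism $\hat\psi : B \to J$ with $\hat\psi\circ\phi=\psi$. For $v,w\in V(J)$, $\mathrm{edges}_J(v,w) := \sigma_J^{-1}(v)\cap\tau_J^{-1}(w)$; $J$ is loaded if $\mathrm{edges}_J(v,w)\neq\emptyset$ for all $v,w\in V(J)$. *)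

(* Defs.v *)
Set Implicit Arguments.

Record quiver : Type := Quiver {
  qV : Type;
  qE : Type;
  qsrc : qE -> qV;
  qtgt : qE -> qV
}.

Record qhom (G H : quiver) : Type := QHom {
  homV : qV G -> qV H;
  homE : qE G -> qE H;
  hom_src : forall e, homV (qsrc G e) = qsrc H (homE e);
  hom_tgt : forall e, homV (qtgt G e) = qtgt H (homE e)
}.

Definition qcomp (A B C : quiver) (g : qhom B C) (f : qhom A B) : qhom A C.
Proof.
  refine (@QHom A C (fun v => homV g (homV f v)) (fun e => homE g (homE f e)) _ _).
  - intro e. rewrite (hom_src f e). apply (hom_src g).
  - intro e. rewrite (hom_tgt f e). apply (hom_tgt g).
Defined.

Definition qmono (A B : quiver) (phi : qhom A B) : Prop :=
  forall (C : quiver) (g h : qhom C A), qcomp phi g = qcomp phi h -> g = h.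

Definition mono_injective (J : quiver) : Prop :=
  forall (A B : quiver) (phi : qhom A B) (psi : qhom A J),
    qmono phi -> exists psihat : qhom B J, qcomp psihat phi = psi.

Definition edges (J : quiver) (v w : qV J) : qE J -> Prop :=
  fun e => qsrc J e = v /\ qtgt J e = w.

Definition loaded (J : quiver) : Prop :=
  forall v w : qV J, exists e : qE J, edges J v w e.

(* Main.v *)
Require Import Defs.
From Stdlib Require Import ClassicalEpsilon FunctionalExtensionality ProofIrrelevance.

Lemma qhom_ext (G H : quiver) (g h : qhom G H) :
  (forall v, homV g v = homV h v) -> (forall e, homE g e = homE h e) -> g = h.
Proof.
  destruct g as [gV gE gs gt], h as [hV hE hs ht]; simpl; intros HV HE.
  assert (gV = hV) by (apply functional_extensionality; auto). subst hV.
  assert (gE = hE) by (apply functional_extensionality; auto). subst hE.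
  f_equal; apply functional_extensionality_dep; intros; apply proof_irrelevance.
Qed.

Lemma inj_mono (A B : quiver) (phi : qhom A B) :
  (forall a1 a2, homV phi a1 = homV phi a2 -> a1 = a2) ->
  (forall a1 a2, homE phi a1 = homE phi a2 -> a1 = a2) -> qmono phi.
Proof.
  intros iV iE C g h Hc. apply qhom_ext.
  - intro v. apply iV. exact (f_equal (fun k => homV k v) Hc).
  - intro e. apply iE. exact (f_equal (fun k => homE k e) Hc).
Qed.

Definition Q0 : quiver := Quiver (fun e : Empty_set => match e with end : Empty_set)
                                 (fun e : Empty_set => match e with end : Empty_set).
Definition Q1 : quiver := Quiver (fun e : Empty_set => match e with end : unit)
                                 (fun e : Empty_set => match e with end : unit).
Definition phi01 : qhom Q0 Q1.
Proof. refine (@QHom Q0 Q1 (fun v => match v with end) (fun e => match e with end) _ _);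
  intros []. Defined.
Definition QA : quiver := Quiver (fun e : Empty_set => match e with end : bool)
                                 (fun e : Empty_set => match e with end : bool).
Definition QB : quiver := Quiver (fun _ : unit => true) (fun _ : unit => false).
Definition phiAB : qhom QA QB.
Proof. refine (@QHom QA QB (fun v => v) (fun e => match e with end) _ _);
  intros []. Defined.

Definition QV1 : quiver := Quiver (fun e : Empty_set => match e with end : unit)
                                 (fun e : Empty_set => match e with end : unit).
Definition QE1 : quiver := Quiver (fun _ : unit => true) (fun _ : unit => false).

Lemma mono_injV (A B : quiver) (phi : qhom A B) : qmono phi ->
  forall a1 a2, homV phi a1 = homV phi a2 -> a1 = a2.
Proof.
  intros Hm a1 a2 He.
  pose (g := @QHom QV1 A (fun _ => a1) (fun e => match e with end) (fun e => match e with end)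
               (fun e => match e with end)).
  pose (h := @QHom QV1 A (fun _ => a2) (fun e => match e with end) (fun e => match e with end)
               (fun e => match e with end)).
  assert (g = h).
  { apply Hm. apply qhom_ext; simpl; [intros _; exact He | intros []]. }
  exact (f_equal (fun k : qhom QV1 A => homV k tt) H).
Qed.

Lemma mono_injE (A B : quiver) (phi : qhom A B) : qmono phi ->
  forall a1 a2, homE phi a1 = homE phi a2 -> a1 = a2.
Proof.
  intros Hm a1 a2 He.
  pose (g := @QHom QE1 A (fun b : bool => if b then qsrc A a1 else qtgt A a1) (fun _ => a1)
               (fun _ => eq_refl) (fun _ => eq_refl)).
  pose (h := @QHom QE1 A (fun b : bool => if b then qsrc A a2 else qtgt A a2) (fun _ => a2)
               (fun _ => eq_refl) (fun _ => eq_refl)).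
  assert (g = h).
  { apply Hm. apply qhom_ext; simpl.
    - intros []; rewrite !hom_src || rewrite !hom_tgt; now rewrite He.
    - intros _; exact He. }
  exact (f_equal (fun k : qhom QE1 A => homE k tt) H).
Qed.

Section Ext.
Variables (A B J : quiver) (phi : qhom A B) (psi : qhom A J).
Hypothesis (iV : forall a1 a2, homV phi a1 = homV phi a2 -> a1 = a2).
Hypothesis (iE : forall a1 a2, homE phi a1 = homE phi a2 -> a1 = a2).
Hypothesis (HL : loaded J) (v0 : qV J).

Definition fV (b : qV B) : qV J :=
  match excluded_middle_informative (exists a, homV phi a = b) with
  | left H => homV psi (proj1_sig (constructive_indefinite_description _ H))
  | right _ => v0
  end.

Lemma fV_phi a : fV (homV phi a) = homV psi a.
Proof.
  unfold fV. destruct excluded_middle_informative as [H|H].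
  - destruct constructive_indefinite_description as [x Hx]; simpl. now rewrite (iV _ _ Hx).
  - exfalso; apply H; eauto.
Qed.

Definition fE (e : qE B) : qE J :=
  match excluded_middle_informative (exists a, homE phi a = e) with
  | left H => homE psi (proj1_sig (constructive_indefinite_description _ H))
  | right _ => proj1_sig (constructive_indefinite_description _
                 (HL (fV (qsrc B e)) (fV (qtgt B e))))
  end.

Lemma fE_phi a : fE (homE phi a) = homE psi a.
Proof.
  unfold fE. destruct excluded_middle_informative as [H|H].
  - destruct constructive_indefinite_description as [x Hx]; simpl. now rewrite (iE _ _ Hx).
  - exfalso; apply H; eauto.
Qed.

Lemma fE_src e : fV (qsrc B e) = qsrc J (fE e) /\ fV (qtgt B e) = qtgt J (fE e).
Proof.
  destruct (excluded_middle_informative (exists a, homE phi a = e)) as [[a Ha]|H].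
  - subst e. rewrite fE_phi, <- hom_src, <- hom_tgt, !fV_phi.
    split; [apply hom_src | apply hom_tgt].
  - unfold fE. destruct excluded_middle_informative as [H'|_]; [contradiction|].
    destruct constructive_indefinite_description as [x [Hx1 Hx2]]; simpl. auto.
Qed.

Definition psihat : qhom B J :=
  @QHom B J fV fE (fun e => proj1 (fE_src e)) (fun e => proj2 (fE_src e)).

Lemma psihat_ok : qcomp psihat phi = psi.
Proof. apply qhom_ext; simpl; [apply fV_phi | apply fE_phi]. Qed.
End Ext.

Theorem mainTheorem2 (J : quiver) :
  mono_injective J <-> (loaded J /\ inhabited (qV J)).
Proof.
  split.
  - intro MI.
    assert (Hi : inhabited (qV J)).
    { pose (psi := @QHom Q0 J (fun v => match v with end) (fun e => match e with end)
                     (fun e => match e with end) (fun e => match e with end)).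
      destruct (MI Q0 Q1 phi01 psi) as [ph _].
      - apply inj_mono; intros [].
      - exact (inhabits (homV ph tt)). }
    split; [|exact Hi].
    intros v w.
    pose (psi := @QHom QA J (fun b : bool => if b then v else w) (fun e => match e with end)
                     (fun e => match e with end) (fun e => match e with end)).
    destruct (MI QA QB phiAB psi) as [ph Hph].
    + apply inj_mono; [simpl; auto | intros []].
    + exists (homE ph tt). pose proof (f_equal (fun k => homV k) Hph) as HV; simpl in HV.
      split.
      * rewrite <- (hom_src ph tt). simpl. exact (f_equal (fun f => f true) HV).
      * rewrite <- (hom_tgt ph tt). simpl. exact (f_equal (fun f => f false) HV).
  - intros [HL [v0]] A B phi psi Hm.
    exists (@psihat A B J phi psi (@mono_injV A B phi Hm) (@mono_injE A B phi Hm) HL v0).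
    apply (@psihat_ok A B J).
Qed.
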